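(* Suppose $F$ satisfies Assumption A1, $F\in MDA(\Lambda)$, Assumption A3, and $x_F=\infty$; let $u=\bar F/f$. For a threshold $a$ set $\beta=\bar F(a)$, $\eta=f(a)$, $\nu=-f'(a)$, and let $z^*(a,b)$ be the optimal value of $$\sup_g\int_b^\infty g(x)dx\ \text{ s.t. }\int_a^\infty g=\beta,\ g(a)=g(a+)=\eta,\ g'_+(a)\ge-\nu,\ g\text{ convex and }\ge0\text{ on }[a,\infty).$$ Fix $x\ge0$ and let $b=a+xu(a)$. Then $$\lim_{a\to\infty}\frac{z^*(a,b)}{\bar F(b)}=\begin{cases}\frac12e^x&\text{if }x\ge1,\\ \left(1-x+\frac12x^2\right)e^x&\text{if }x<1.\end{cases}$$
   Context: $X$ is a continuous random variable with distribution function $F$, density $f$, $\bar F=1-F$, right endpoint $x_F=\sup\{x:F(x)<1\}$. $\Lambda(x)=\exp\{-e^{-x}\}$. $F\in MDA(\Lambda)$ means there exist $c_n>0$, $d_n$ with $c_n^{-1}(M_n-d_n)$ converging in distribution to $\Lambda$, $M_n$ the maximum of $n$ i.i.d. copies of $X$. Assumption A1: there exists $z<x_F$ such that on $(z,x_F)$, $F$ is twice differentiable and $f$ is positive, decreasing and convex. Assumption A3: $\lim_{x\uparrow x_F}\bar F(x)f'(x)/f(x)^2=-1$. $g(a+)$ is the right limit and $g'_+$ the right derivative. *)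

(* Defs.v *)
From Stdlib Require Import Reals.
From Coquelicot Require Import Coquelicot.
Open Scope R_scope.

Definition is_cont_cdf_with_density (F f : R -> R) : Prop :=
  (forall x y, x <= y -> F x <= F y) /\
  (forall x, continuous F x) /\
  is_lim F m_infty 0 /\ is_lim F p_infty 1 /\
  (forall x, 0 <= f x) /\
  (forall x, is_RInt_gen f (Rbar_locally m_infty) (at_point x) (F x)).

Definition Lambda (x : R) : R := exp (- exp (- x)).

(* F in MDA(Lambda): there are c_n > 0, d_n such that c_n^{-1}(M_n - d_n)
   converges in distribution to Lambda; since Lambda is continuous and
   P(c_n^{-1}(M_n - d_n) <= t) = F(c_n t + d_n)^n, this is pointwise
   convergence at every t. *)
Definition MDA_Lambda (F : R -> R) : Prop :=
  exists c d : nat -> R, (forall n, 0 < c n) /\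
    forall t, is_lim_seq (fun n => (F (c n * t + d n)) ^ n) (Lambda t).

Definition AssumptionA1 (F f f' : R -> R) : Prop :=
  exists z : R,
    (forall x, z < x -> is_derive F x (f x)) /\
    (forall x, z < x -> is_derive f x (f' x)) /\
    (forall x, z < x -> 0 < f x) /\
    (forall x y, z < x -> x <= y -> f y <= f x) /\
    (forall x y t, z < x -> z < y -> 0 <= t <= 1 ->
        f (t * x + (1 - t) * y) <= t * f x + (1 - t) * f y).

Definition AssumptionA3 (F f f' : R -> R) : Prop :=
  is_lim (fun x => (1 - F x) * f' x / (f x) ^ 2) p_infty (-1).

Definition right_endpoint_infinite (F : R -> R) : Prop := forall x, F x < 1.

Definition feasible (a beta eta nu : R) (g : R -> R) : Prop :=
  is_RInt_gen g (at_point a) (Rbar_locally p_infty) beta /\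
  g a = eta /\
  filterlim g (at_right a) (locally eta) /\
  (exists d, filterlim (fun h => (g (a + h) - g a) / h) (at_right 0) (locally d)
             /\ - nu <= d) /\
  (forall x y t, a <= x -> a <= y -> 0 <= t <= 1 ->
        g (t * x + (1 - t) * y) <= t * g x + (1 - t) * g y) /\
  (forall x, a <= x -> 0 <= g x).

Definition zstar (F f f' : R -> R) (a b : R) : Rbar :=
  Lub_Rbar (fun v => exists g,
     feasible a (1 - F a) (f a) (- f' a) g /\
     is_RInt_gen g (at_point b) (Rbar_locally p_infty) v).

Definition limit_value (x : R) : R :=
  if Rle_dec 1 x then exp x / 2 else (1 - x + x ^ 2 / 2) * exp x.

(* Main.v *)
Require Import Defs.
From Coquelicot Require Import Coquelicot.
From Stdlib Require Import Reals Lra.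
Open Scope R_scope.

Lemma ball_R (c e y : R) : Rabs (y - c) < e -> ball c e y.
Proof. intros H. exact H. Qed.
Lemma ball_R' (c e y : R) : ball c e y -> Rabs (y - c) < e.
Proof. intros H. exact H. Qed.

Lemma gen_to_ex (g : R -> R) a l :
  is_RInt_gen g (at_point a) (Rbar_locally p_infty) l ->
  exists M, forall y, M < y -> ex_RInt g a y.
Proof.
  intros H. specialize (H (fun _ => True)).
  destruct H as [Q R HQ HR HP].
  - apply filter_true.
  - destruct HR as [M HM]. exists M. intros y Hy.
    destruct (HP a y HQ (HM y Hy)) as [l' [Hl _]]. exists l'. exact Hl.
Qed.

Lemma ex_to_gen (g : R -> R) a M l :
  (forall y, M < y -> is_RInt g a y l) ->
  is_RInt_gen g (at_point a) (Rbar_locally p_infty) l.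
Proof.
  intros H P HP. unfold filtermapi.
  apply Filter_prod with (fun t => t = a) (fun y => M < y).
  - reflexivity.
  - exists M. auto.
  - intros t y -> Hy. exists l. split. apply H; auto. apply locally_singleton; auto.
Qed.

Lemma gen_split (g : R -> R) a b l1 l2 :
  a <= b ->
  is_RInt_gen g (at_point a) (Rbar_locally p_infty) l1 ->
  is_RInt_gen g (at_point b) (Rbar_locally p_infty) l2 ->
  ex_RInt g a b /\ l1 = RInt g a b + l2.
Proof.
  intros Hab H1 H2.
  destruct (gen_to_ex g a l1 H1) as [M HM].
  assert (Hex : ex_RInt g a b).
  { apply (@ex_RInt_Chasles_1 R_CompleteNormedModule) with (Rmax M b + 1).
    split; auto. pose proof (Rmax_r M b); lra.
    apply HM. pose proof (Rmax_l M b); lra. }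
  split; auto.
  assert (H3 : is_RInt_gen g (at_point a) (Rbar_locally p_infty) (plus (RInt g a b) l2)).
  { apply (@is_RInt_gen_Chasles R_NormedModule) with b; auto; try apply _.
    apply is_RInt_gen_at_point. apply (@RInt_correct R_CompleteNormedModule); auto. }
  apply (@is_RInt_gen_unique R_CompleteNormedModule) in H1; try apply _. apply (@is_RInt_gen_unique R_CompleteNormedModule) in H3; try apply _.
  rewrite <- H1, H3. reflexivity.
Qed.

Lemma lin_int (p q a0 a1 a2 : R) :
  is_RInt (fun t => p - q * (t - a0)) a1 a2
    ((p*(a2-a0) - q*(a2-a0)^2/2) - (p*(a1-a0) - q*(a1-a0)^2/2)).
Proof.
  apply (is_RInt_derive (fun t => p*(t-a0) - q*(t-a0)^2/2)).
  - intros t _. auto_derive; auto. field.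
  - intros t _. apply (@ex_derive_continuous R_AbsRing R_NormedModule). auto_derive; auto.
Qed.

Lemma chord (g : R -> R) a eta nu d :
  g a = eta ->
  filterlim (fun h => (g (a + h) - g a) / h) (at_right 0) (locally d) ->
  - nu <= d ->
  (forall x y t, a <= x -> a <= y -> 0 <= t <= 1 ->
        g (t * x + (1 - t) * y) <= t * g x + (1 - t) * g y) ->
  forall t, a <= t -> eta - nu * (t - a) <= g t.
Proof.
  intros Ha Hd Hnu Hc t Ht.
  destruct (Req_dec t a) as [->|Hne].
  { rewrite Ha. lra. }
  destruct (Rle_or_lt (eta - nu * (t - a)) (g t)) as [H|H]; auto.
  exfalso.
  set (c := (g t - eta) / (t - a)).
  assert (Hc1 : c < d).
  { unfold c. apply Rlt_le_trans with (-nu); auto.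
    apply Rmult_lt_reg_r with (t - a). lra.
    unfold Rdiv. rewrite Rmult_assoc, Rinv_l by lra. lra. }
  assert (Hq : forall h, 0 < h < t - a -> (g (a + h) - g a) / h <= c).
  { intros h Hh.
    pose proof (Hc t a (h / (t - a)) Ht (Rle_refl a)) as Hc'.
    assert (E : h / (t - a) * t + (1 - h / (t - a)) * a = a + h) by (field; lra).
    rewrite E in Hc'.
    assert (Hs : 0 <= h / (t - a) <= 1).
    { split. apply Rdiv_le_0_compat; lra.
      apply Rmult_le_reg_r with (t - a). lra.
      unfold Rdiv. rewrite Rmult_assoc, Rinv_l by lra. lra. }
    specialize (Hc' Hs).
    unfold c. rewrite Ha in *.
    apply Rmult_le_reg_r with h. lra.
    unfold Rdiv at 1. rewrite Rmult_assoc, Rinv_l by lra. rewrite Rmult_1_r.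
    replace ((g t - eta) / (t - a) * h) with (h / (t - a) * (g t - eta)) by (field; lra).
    lra. }
  assert (Hpos : 0 < d - c) by lra.
  pose proof (proj1 (filterlim_locally _ d) Hd (mkposreal _ Hpos)) as Hl.
  destruct Hl as [del Hdel].
  set (h := Rmin (del / 2) ((t - a) / 2)).
  assert (Hh1 : 0 < h).
  { unfold h. apply Rmin_case. destruct del; simpl; lra. lra. }
  assert (Hh2 : h < t - a). { unfold h. pose proof (Rmin_r (del/2) ((t-a)/2)). lra. }
  assert (Hh3 : h < del). { unfold h. pose proof (Rmin_l (del/2) ((t-a)/2)). destruct del; simpl in *; lra. }
  assert (B : ball 0 del h).
  { apply ball_R. rewrite Rminus_0_r, Rabs_right; lra. }
  specialize (Hdel h B Hh1). apply ball_R' in Hdel. simpl in Hdel.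
  specialize (Hq h (conj Hh1 Hh2)).
  apply Rabs_lt_between in Hdel. lra.
Qed.

Lemma upper (g : R -> R) a b beta eta nu (v : R) :
  feasible a beta eta nu g -> 0 < nu -> 0 < eta -> a <= b ->
  is_RInt_gen g (at_point b) (Rbar_locally p_infty) v ->
  let m := Rmin (b - a) (eta / nu) in
  v <= beta - (eta * m - nu * m ^ 2 / 2).
Proof.
  intros [H1 [H2 [_ [[d [Hd Hdn]] [Hc Hpos]]]]] Hnu Heta Hab Hv m.
  destruct (gen_split g a b beta v Hab H1 Hv) as [Hex Heq].
  assert (Hm : 0 <= m <= b - a).
  { unfold m. split. apply Rmin_glb; try lra. apply Rlt_le, Rdiv_lt_0_compat; lra.
    apply Rmin_l. }
  assert (Hm2 : m <= eta / nu) by apply Rmin_r.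
  set (c := a + m).
  assert (Ex1 : ex_RInt g a c).
  { apply (@ex_RInt_Chasles_1 R_CompleteNormedModule) with b; auto. unfold c; lra. }
  assert (Ex2 : ex_RInt g c b).
  { apply (@ex_RInt_Chasles_2 R_CompleteNormedModule) with a; auto. unfold c; lra. }
  assert (E : RInt g a b = RInt g a c + RInt g c b).
  { symmetry. apply (@RInt_Chasles R_CompleteNormedModule); auto. }
  assert (P2 : 0 <= RInt g c b).
  { apply RInt_ge_0; auto. unfold c; lra. intros t Ht. apply Hpos. unfold c in Ht; lra. }
  assert (P1 : eta * m - nu * m ^ 2 / 2 <= RInt g a c).
  { pose proof (lin_int eta nu a a c) as HL.
    apply (@is_RInt_unique R_CompleteNormedModule) in HL.
    replace (eta * m - nu * m ^ 2 / 2) with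
      (RInt (fun t => eta - nu * (t - a)) a c).
    2:{ rewrite HL. unfold c. simpl. field. }
    apply RInt_le; auto. unfold c; lra.
    eexists. apply lin_int.
    intros t Ht. apply (chord g a eta nu d); auto. lra. }
  lra.
Qed.
Lemma Rmax_lip (p q p' q' e : R) : Rabs (p - p') < e -> Rabs (q - q') < e ->
  Rabs (Rmax p q - Rmax p' q') < e.
Proof.
  intros H1 H2. apply Rabs_lt_between in H1. apply Rabs_lt_between in H2.
  apply Rabs_lt_between.
  unfold Rmax; destruct (Rle_dec p q); destruct (Rle_dec p' q'); lra.
Qed.

Lemma cont_Rmax (f g : R -> R) t : continuous f t -> continuous g t ->
  continuous (fun y => Rmax (f y) (g y)) t.
Proof.
  intros Hf Hg. unfold continuous in *.
  apply filterlim_locally. intros eps.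
  pose proof (proj1 (filterlim_locally _ _) Hf eps) as A.
  pose proof (proj1 (filterlim_locally _ _) Hg eps) as B.
  generalize (filter_and _ _ A B). apply filter_imp.
  intros y [Ay By]. apply ball_R. apply Rmax_lip; apply ball_R'; auto.
Qed.

Lemma cont_lin (p q c t : R) : continuous (fun y => p - q * (y - c)) t.
Proof. apply (@ex_derive_continuous R_AbsRing R_NormedModule). auto_derive; auto. Qed.

Lemma cont_g (p q c p' q' c' t : R) :
  continuous (fun y => Rmax (Rmax (p - q * (y - c)) (p' - q' * (y - c'))) 0) t.
Proof.
  apply (cont_Rmax (fun y => Rmax (p - q * (y - c)) (p' - q' * (y - c'))) (fun _ => 0)).
  apply cont_Rmax; apply cont_lin. apply continuous_const.
Qed.

Lemma conv_g (p q c p' q' c' : R) : forall x y t, 0 <= t <= 1 ->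
  let G := fun y => Rmax (Rmax (p - q * (y - c)) (p' - q' * (y - c'))) 0 in
  G (t * x + (1 - t) * y) <= t * G x + (1 - t) * G y.
Proof.
  intros x y t Ht G. unfold G.
  assert (A1 : forall z, p - q * (z - c) <= Rmax (Rmax (p - q * (z - c)) (p' - q' * (z - c'))) 0).
  { intros z. eapply Rle_trans; [apply Rmax_l|apply Rmax_l]. }
  assert (A2 : forall z, p' - q' * (z - c') <= Rmax (Rmax (p - q * (z - c)) (p' - q' * (z - c'))) 0).
  { intros z. eapply Rle_trans; [apply Rmax_r|apply Rmax_l]. }
  assert (A3 : forall z, 0 <= Rmax (Rmax (p - q * (z - c)) (p' - q' * (z - c'))) 0).
  { intros z. apply Rmax_r. }
  apply Rmax_lub; [apply Rmax_lub|].
  - replace (p - q * (t * x + (1 - t) * y - c)) with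
      (t * (p - q * (x - c)) + (1 - t) * (p - q * (y - c))) by ring.
    apply Rplus_le_compat; apply Rmult_le_compat_l; try lra; auto.
  - replace (p' - q' * (t * x + (1 - t) * y - c')) with
      (t * (p' - q' * (x - c')) + (1 - t) * (p' - q' * (y - c'))) by ring.
    apply Rplus_le_compat; apply Rmult_le_compat_l; try lra; auto.
  - pose proof (A3 x); pose proof (A3 y).
    assert (0 <= t * Rmax (Rmax (p - q * (x - c)) (p' - q' * (x - c'))) 0) by (apply Rmult_le_pos; lra).
    assert (0 <= (1-t) * Rmax (Rmax (p - q * (y - c)) (p' - q' * (y - c'))) 0) by (apply Rmult_le_pos; lra).
    lra.
Qed.

Definition gc (a eta nu s h mm : R) (t : R) : R :=
  Rmax (Rmax (eta - nu * (t - a)) (h - mm * (t - (a + s)))) 0.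

Lemma gc_ex a eta nu s h mm x y : ex_RInt (gc a eta nu s h mm) x y.
Proof. apply (@ex_RInt_continuous R_CompleteNormedModule). intros z _. unfold gc. apply cont_g. Qed.

Lemma construct a b beta eta nu s :
  0 < beta -> 0 < eta -> 0 < nu -> eta ^ 2 < 2 * beta * nu -> 0 < s < eta / nu -> a <= b ->
  exists (g : R -> R) (v : R), feasible a beta eta nu g /\
    is_RInt_gen g (at_point b) (Rbar_locally p_infty) v /\
    (b - a <= s -> v = beta - (eta * (b - a) - nu * (b - a) ^ 2 / 2)) /\
    (a + s <= b -> beta - (eta * s - nu * s ^ 2 / 2) - (eta - nu * s) * (b - a - s) <= v).
Proof.
  intros Hb He Hn Hr [Hs1 Hs2] Hab.
  set (h := eta - nu * s).
  set (Rr := beta - (eta * s - nu * s ^ 2 / 2)).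
  set (mm := h ^ 2 / (2 * Rr)).
  assert (Hns : nu * s < eta).
  { apply Rmult_lt_compat_l with (r := nu) in Hs2; auto.
    unfold Rdiv in Hs2. rewrite <- Rmult_assoc, (Rmult_comm nu eta), Rmult_assoc, Rinv_r in Hs2 by lra. lra. }
  assert (Hh : 0 < h) by (unfold h; lra).
  assert (HR : 2 * nu * Rr > h ^ 2) by (unfold Rr, h; nra).
  assert (HR0 : 0 < Rr).
  { destruct (Rle_or_lt Rr 0); auto. assert (0 < h^2) by (apply pow_lt; auto). nra. }
  assert (Hm : 0 < mm) by (unfold mm; apply Rdiv_lt_0_compat; [apply pow_lt; auto| lra]).
  assert (Hmn : mm <= nu).
  { unfold mm. apply Rmult_le_reg_r with (2 * Rr). lra.
    unfold Rdiv. rewrite Rmult_assoc, Rinv_l by lra. lra. }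
  assert (HmR : mm * (2 * Rr) = h ^ 2) by (unfold mm; field; lra).
  set (E := a + s + h / mm).
  assert (HE : mm * (E - (a + s)) = h) by (unfold E; field; lra).
  assert (HE2 : a + s < E) by (unfold E; assert (0 < h / mm) by (apply Rdiv_lt_0_compat; lra); lra).
  set (g := gc a eta nu s h mm).
  assert (F1 : forall t, t <= a + s -> g t = eta - nu * (t - a)).
  { intros t Ht. unfold g, gc.
    assert (eta - nu * (t - a) - (h - mm * (t - (a + s))) = (nu - mm) * (a + s - t)) by (unfold h; ring).
    assert (0 <= (nu - mm) * (a + s - t)) by (apply Rmult_le_pos; lra).
    assert (eta - nu * (t - a) = h + nu * (a + s - t)) by (unfold h; ring).
    assert (0 <= nu * (a + s - t)) by (apply Rmult_le_pos; lra).
    rewrite (Rmax_left (eta - nu * (t - a))) by lra. apply Rmax_left. lra. }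
  assert (F2 : forall t, a + s <= t -> g t <= h).
  { intros t Ht. unfold g, gc.
    assert (eta - nu * (t - a) - (h - mm * (t - (a + s))) = (nu - mm) * (a + s - t)) by (unfold h; ring).
    assert ((nu - mm) * (a + s - t) <= 0) by (assert (0 <= (nu - mm) * (t - (a + s))) by (apply Rmult_le_pos; lra); nra).
    assert (0 <= mm * (t - (a + s))) by (apply Rmult_le_pos; lra).
    apply Rmax_lub; [apply Rmax_lub|]; lra. }
  assert (F2' : forall t, a + s <= t <= E -> g t = h - mm * (t - (a + s))).
  { intros t Ht. unfold g, gc.
    assert (eta - nu * (t - a) - (h - mm * (t - (a + s))) = (nu - mm) * (a + s - t)) by (unfold h; ring).
    assert ((nu - mm) * (a + s - t) <= 0) by (assert (0 <= (nu - mm) * (t - (a + s))) by (apply Rmult_le_pos; lra); nra).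
    assert (mm * (t - (a + s)) <= mm * (E - (a + s))) by (apply Rmult_le_compat_l; lra).
    rewrite (Rmax_right (eta - nu * (t - a))) by lra. apply Rmax_left. lra. }
  assert (F3 : forall t, E <= t -> g t = 0).
  { intros t Ht. unfold g, gc.
    assert (eta - nu * (t - a) - (h - mm * (t - (a + s))) = (nu - mm) * (a + s - t)) by (unfold h; ring).
    assert ((nu - mm) * (a + s - t) <= 0) by (assert (0 <= (nu - mm) * (t - (a + s))) by (apply Rmult_le_pos; lra); nra).
    assert (mm * (E - (a + s)) <= mm * (t - (a + s))) by (apply Rmult_le_compat_l; lra).
    apply Rmax_right. apply Rmax_lub; lra. }
  assert (F4 : forall t, eta - nu * (t - a) <= g t).
  { intros t. unfold g, gc. eapply Rle_trans; [apply Rmax_l|apply Rmax_l]. }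
  assert (F5 : forall t, a <= t -> g t <= eta).
  { intros t Ht. destruct (Rle_or_lt t (a + s)).
    rewrite F1 by auto. assert (0 <= nu * (t - a)) by (apply Rmult_le_pos; lra). lra.
    pose proof (F2 t ltac:(lra)). unfold h in *. assert (0 <= nu * s) by (apply Rmult_le_pos; lra). lra. }
  assert (Hex : forall x y, ex_RInt g x y) by (intros; apply gc_ex).
  assert (I1 : RInt g a (a + s) = eta * s - nu * s ^ 2 / 2).
  { rewrite (RInt_ext _ (fun t => eta - nu * (t - a))).
    rewrite (@is_RInt_unique R_CompleteNormedModule _ _ _ _ (lin_int eta nu a a (a + s))). simpl; field.
    intros t Ht. apply F1. rewrite Rmax_right in Ht by lra. lra. }
  assert (I2 : RInt g (a + s) E = Rr).
  { rewrite (RInt_ext _ (fun t => h - mm * (t - (a + s)))).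
    rewrite (@is_RInt_unique R_CompleteNormedModule _ _ _ _ (lin_int h mm (a + s) (a + s) E)). simpl.
    replace (E - (a + s)) with (h / mm) by (unfold E; ring).
    apply Rmult_eq_reg_l with (2 * mm). 2: lra.
    replace (2 * mm * Rr) with (h ^ 2) by lra. field. lra.
    intros t Ht. rewrite Rmin_left in Ht by lra. rewrite Rmax_right in Ht by lra. apply F2'. lra. }
  assert (I3 : forall y, E <= y -> RInt g E y = 0).
  { intros y Hy. rewrite (RInt_ext _ (fun t => 0 - 0 * (t - a))).
    rewrite (@is_RInt_unique R_CompleteNormedModule _ _ _ _ (lin_int 0 0 a E y)). simpl; field.
    intros t Ht. rewrite Rmin_left in Ht by lra. rewrite Rmax_right in Ht by lra. rewrite F3 by lra. simpl; lra. }
  assert (Itot : forall y, E <= y -> RInt g a y = beta).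
  { intros y Hy.
    rewrite <- (@RInt_Chasles R_CompleteNormedModule g a (a + s) y) by auto.
    rewrite <- (@RInt_Chasles R_CompleteNormedModule g (a + s) E y) by auto.
    rewrite I1, I2, I3 by auto. unfold Rr. simpl. unfold plus; simpl. ring. }
  exists g, (beta - RInt g a b).
  split; [|split; [|split]].
  - split; [|split; [|split; [|split; [|split]]]].
    + apply (ex_to_gen g a E). intros y Hy. rewrite <- (Itot y) by lra.
      apply (@RInt_correct R_CompleteNormedModule). auto.
    + rewrite F1 by lra. ring.
    + apply filterlim_locally. intros eps.
      unfold at_right, within.
      assert (Hd : 0 < eps / nu) by (apply Rdiv_lt_0_compat; [apply cond_pos|lra]).
      exists (mkposreal _ Hd). intros t Ht Hat. apply ball_R' in Ht. simpl in Ht.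
      apply ball_R. pose proof (F4 t). pose proof (F5 t ltac:(lra)).
      rewrite Rabs_right in Ht by lra.
      assert (nu * (t - a) < eps).
      { apply Rmult_lt_compat_l with (r := nu) in Ht; auto.
        replace (nu * (eps / nu)) with (pos eps) in Ht by (field; lra). lra. }
      rewrite Rabs_left1 by lra. lra.
    + exists (- nu). split; [|lra].
      apply filterlim_ext_loc with (fun _ => - nu).
      2: apply filterlim_const.
      unfold at_right, within. exists (mkposreal _ Hs1). intros t Ht Hat.
      apply ball_R' in Ht. simpl in Ht. rewrite Rminus_0_r, Rabs_right in Ht by lra.
      rewrite !F1 by lra. field. lra.
    + intros x y t _ _ Ht. apply (conv_g eta nu a h mm (a + s) x y t Ht).
    + intros t _. unfold g, gc. apply Rmax_r.
  - apply (ex_to_gen g b (Rmax E b)). intros y Hy.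
    pose proof (Rmax_l E b); pose proof (Rmax_r E b).
    replace (beta - RInt g a b) with (RInt g b y).
    apply (@RInt_correct R_CompleteNormedModule). auto.
    assert (HC : RInt g a b + RInt g b y = RInt g a y)
      by exact (@RInt_Chasles R_CompleteNormedModule g a b y (Hex a b) (Hex b y)).
    pose proof (Itot y ltac:(lra)). lra.
  - intros Hbs. f_equal.
    rewrite (RInt_ext _ (fun t => eta - nu * (t - a))).
    rewrite (@is_RInt_unique R_CompleteNormedModule _ _ _ _ (lin_int eta nu a a b)). simpl; field.
    intros t Ht. apply F1. rewrite Rmax_right in Ht by lra. lra.
  - intros Hsb.
    assert (HC : RInt g a (a + s) + RInt g (a + s) b = RInt g a b)
      by exact (@RInt_Chasles R_CompleteNormedModule g a (a + s) b (Hex _ _) (Hex _ _)).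
    rewrite <- HC, I1.
    assert (RInt g (a + s) b <= h * (b - a - s)).
    { replace (h * (b - a - s)) with (RInt (fun t => h - 0 * (t - a)) (a + s) b).
      apply RInt_le; auto. eexists; apply lin_int.
      intros t Ht. rewrite Rmult_0_l, Rminus_0_r. apply F2. lra.
      rewrite (@is_RInt_unique R_CompleteNormedModule _ _ _ _ (lin_int h 0 a (a + s) b)). simpl; field. }
    unfold h, Rr in *. lra.
Qed.

Lemma zval F f f' a b :
  0 < 1 - F a -> 0 < f a -> 0 < - f' a -> f a ^ 2 < 2 * (1 - F a) * (- f' a) -> a <= b ->
  real (zstar F f f' a b) =
   (1 - F a) - (f a * Rmin (b - a) (f a / - f' a) - (- f' a) * (Rmin (b - a) (f a / - f' a)) ^ 2 / 2).
Proof.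
  set (beta := 1 - F a). set (eta := f a). set (nu := - f' a).
  intros Hb He Hn Hr Hab.
  set (T := eta / nu).
  assert (HT : 0 < T) by (unfold T; apply Rdiv_lt_0_compat; lra).
  assert (HeT : eta = nu * T) by (unfold T; field; lra).
  set (m := Rmin (b - a) T).
  unfold zstar.
  rewrite (is_lub_Rbar_unique _ (Finite (beta - (eta * m - nu * m ^ 2 / 2)))).
  reflexivity.
  split.
  - intros v [g [Hf Hv]]. simpl. apply (upper g a b beta eta nu v); auto.
  - intros b' Hub.
    destruct (Rlt_or_le (b - a) T) as [HbT|HbT].
    + destruct (construct a b beta eta nu ((b - a + T) / 2)) as [g [v [Hf [Hv [Hv1 _]]]]]; auto.
      unfold T in *; lra.
      assert (Hm : m = b - a) by (unfold m; apply Rmin_left; lra).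
      rewrite Hm. rewrite <- Hv1 by lra. apply Hub. exists g; auto.
    + assert (Hm : m = T) by (unfold m; apply Rmin_right; lra).
      rewrite Hm.
      destruct b' as [r| |]; simpl; auto.
      * destruct (Rle_or_lt (beta - (eta * T - nu * T ^ 2 / 2)) r) as [H|H]; auto.
        exfalso.
        set (eps := beta - (eta * T - nu * T ^ 2 / 2) - r).
        assert (Heps : 0 < eps) by (unfold eps; lra).
        assert (Hk : 0 < nu * (b - a) + 1).
        { assert (0 <= nu * (b - a)) by (apply Rmult_le_pos; lra). lra. }
        set (del := Rmin (T / 2) (eps / (2 * (nu * (b - a) + 1)))).
        assert (Hd1 : 0 < del).
        { unfold del. apply Rmin_case. lra. apply Rdiv_lt_0_compat; lra. }
        assert (Hd2 : del <= T / 2) by apply Rmin_l.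
        assert (Hd3 : del <= eps / (2 * (nu * (b - a) + 1))) by apply Rmin_r.
        destruct (construct a b beta eta nu (T - del)) as [g [v [Hf [Hv [_ Hv2]]]]]; auto.
        fold T. lra.
        specialize (Hv2 ltac:(lra)).
        assert (Hle : Rbar_le v r) by (apply Hub; exists g; auto).
        simpl in Hle.
        assert (E1 : eta * T - nu * T ^ 2 / 2 - (eta * (T - del) - nu * (T - del) ^ 2 / 2)
                     = nu * del ^ 2 / 2) by (rewrite HeT; field).
        assert (E2 : eta - nu * (T - del) = nu * del) by (rewrite HeT; ring).
        rewrite E2 in Hv2.
        assert (E3 : nu * del * (b - a - (T - del)) <= nu * del * (b - a)).
        { apply Rmult_le_compat_l. apply Rmult_le_pos; lra. lra. }
        assert (E4 : nu * del * (b - a) + nu * del ^ 2 / 2 < eps).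
        { assert (del * (nu * (b - a) + 1) <= eps / 2).
          { apply Rmult_le_reg_r with (/ (nu * (b - a) + 1)). apply Rinv_0_lt_compat; lra.
            rewrite Rmult_assoc, Rinv_r by lra. rewrite Rmult_1_r.
            replace (eps / 2 * / (nu * (b - a) + 1)) with (eps / (2 * (nu * (b - a) + 1))) by (field; lra).
            auto. }
          assert (nu * del * del <= nu * del * ((b - a) / 2)).
          { apply Rmult_le_compat_l. apply Rmult_le_pos; lra. lra. }
          assert (Q1 : del * (nu * (b - a) + 1) = nu * del * (b - a) + del) by ring.
          assert (Q2 : nu * del * ((b - a) / 2) = nu * del * (b - a) / 2) by field.
          assert (Q3 : nu * del ^ 2 / 2 = nu * del * del / 2) by field.
          rewrite Q3. lra. }
        assert (0 <= nu * del ^ 2 / 2) by (assert (0 < del ^ 2) by (apply pow_lt; lra); apply Rmult_le_pos; [apply Rmult_le_pos|]; lra).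
        unfold eps in E4. lra.
      * destruct (construct a b beta eta nu (T / 2)) as [g [v [Hf [Hv _]]]]; auto.
        fold T; lra.
        assert (Hle : Rbar_le v m_infty) by (apply Hub; exists g; auto).
        simpl in Hle. auto.
Qed.

Lemma lim_eps (g : R -> R) (l : R) : is_lim g p_infty l ->
  forall e, 0 < e -> exists M, forall t, M < t -> Rabs (g t - l) < e.
Proof.
  intros H e He.
  destruct (proj1 (filterlim_locally g l) H (mkposreal e He)) as [M HM].
  exists M. intros t Ht. apply ball_R'. apply HM. auto.
Qed.

Lemma der_Fb (F f : R -> R) t : is_derive F t (f t) -> is_derive (fun y => 1 - F y) t (- f t).
Proof.
  intros H. pose proof (is_derive_minus (fun _ => 1) F t zero (f t) (is_derive_const 1 t) H) as H2.
  simpl in H2. replace (- f t) with (minus zero (f t)).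
  exact H2. unfold minus, plus, opp, zero; simpl. ring.
Qed.

Lemma der_u (F f f' : R -> R) t : is_derive F t (f t) -> is_derive f t (f' t) -> f t <> 0 ->
  is_derive (fun y => (1 - F y) / f y) t (-1 - (1 - F t) * f' t / (f t) ^ 2).
Proof.
  intros H1 H2 H3.
  pose proof (is_derive_div _ _ t _ _ (der_Fb F f t H1) H2 H3) as H.
  replace (-1 - (1 - F t) * f' t / (f t) ^ 2) with ((- f t * f t - (1 - F t) * f' t) / f t ^ 2).
  exact H. field. auto.
Qed.

Lemma der_psi (F f : R -> R) t : is_derive F t (f t) -> 0 < 1 - F t ->
  is_derive (fun y => ln (1 - F y)) t (- f t / (1 - F t)).
Proof.
  intros H1 H2.
  assert (Hl : is_derive ln (1 - F t) (/ (1 - F t))).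
  { apply is_derive_Reals. apply derivable_pt_lim_ln. auto. }
  pose proof (is_derive_comp ln (fun y => 1 - F y) t _ _ Hl (der_Fb F f t H1)) as H.
  replace (- f t / (1 - F t)) with (scal (- f t) (/ (1 - F t))). exact H.
  unfold scal; simpl. unfold mult; simpl. field. lra.
Qed.

Lemma cont_of_der (g : R -> R) t d : is_derive g t d -> continuity_pt g t.
Proof.
  intros H. apply continuity_pt_filterlim.
  apply (@ex_derive_continuous R_AbsRing R_NormedModule). exists d. exact H.
Qed.

Lemma psi_lim (F f f' : R -> R) (x : R) :
  AssumptionA1 F f f' -> AssumptionA3 F f f' -> right_endpoint_infinite F -> 0 <= x ->
  filterlim (fun a => ln (1 - F (a + x * ((1 - F a) / f a))) - ln (1 - F a))
    (Rbar_locally p_infty) (locally (- x)).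
Proof.
  intros [z [HF [Hf [Hp _]]]] H3 Hend Hx.
  set (u := fun y => (1 - F y) / f y).
  set (psi := fun y => ln (1 - F y)).
  assert (Hfb : forall t, 0 < 1 - F t) by (intros t; specialize (Hend t); lra).
  assert (Hu : forall t, z < t -> 0 < u t).
  { intros t Ht. unfold u. apply Rdiv_lt_0_compat; auto. }
  apply filterlim_locally. intros eps.
  set (del := Rmin (eps / (4 * (x * x + 1))) (1 / (2 * (x + 1)))).
  assert (Hxx : 0 < x * x + 1) by nra.
  assert (Hd : 0 < del).
  { unfold del. apply Rmin_case; apply Rdiv_lt_0_compat; try lra. destruct eps; simpl; lra. }
  destruct (lim_eps _ _ H3 del Hd) as [M HM].
  exists (Rmax z M). intros a Ha.
  pose proof (Rmax_l z M); pose proof (Rmax_r z M).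
  set (ua := u a). assert (Hua : 0 < ua) by (apply Hu; lra).
  set (b := a + x * ua).
  assert (Hba : 0 <= b - a) by (unfold b; assert (0 <= x * ua) by (apply Rmult_le_pos; lra); lra).
  destruct (MVT_gen psi a b (fun t => - f t / (1 - F t))) as [xi [Hxi Eq1]].
  { intros t Ht. rewrite Rmin_left in Ht by lra. apply der_psi; auto. apply HF. lra. }
  { intros t Ht. rewrite Rmin_left in Ht by lra. eapply cont_of_der. apply der_psi; auto. apply HF. lra. }
  rewrite Rmin_left in Hxi by lra. rewrite Rmax_right in Hxi by lra.
  destruct (MVT_gen u a xi (fun t => -1 - (1 - F t) * f' t / (f t) ^ 2)) as [ze [Hze Eq2]].
  { intros t Ht. rewrite Rmin_left in Ht by lra. apply der_u. apply HF; lra. apply Hf; lra.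
    assert (0 < f t) by (apply Hp; lra). lra. }
  { intros t Ht. rewrite Rmin_left in Ht by lra. eapply cont_of_der. apply der_u. apply HF; lra. apply Hf; lra.
    assert (0 < f t) by (apply Hp; lra). lra. }
  rewrite Rmin_left in Hze by lra. rewrite Rmax_right in Hze by lra.
  assert (Hdz : Rabs (-1 - (1 - F ze) * f' ze / f ze ^ 2) < del).
  { specialize (HM ze ltac:(lra)).
    replace (-1 - (1 - F ze) * f' ze / f ze ^ 2) with (- ((1 - F ze) * f' ze / f ze ^ 2 - -1)) by ring.
    rewrite Rabs_Ropp. auto. }
  set (w := u xi).
  assert (Hfxi : 0 < f xi) by (apply Hp; lra).
  assert (Hw : w - ua = (-1 - (1 - F ze) * f' ze / f ze ^ 2) * (xi - a)) by exact Eq2.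
  assert (Hw2 : Rabs (w - ua) <= del * (x * ua)).
  { rewrite Hw, Rabs_mult. rewrite (Rabs_right (xi - a)) by lra.
    apply Rmult_le_compat; try lra. apply Rabs_pos. unfold b in Hxi; lra. }
  assert (HD : psi b - psi a = - x * ua / w).
  { rewrite Eq1. pose proof (Hfb xi). unfold w, u, b. field. repeat split; lra. }
  assert (Hdx : del * x <= 1 / 2).
  { assert (del <= 1 / (2 * (x + 1))) by apply Rmin_r.
    assert (del * x <= 1 / (2 * (x + 1)) * x) by (apply Rmult_le_compat_r; lra).
    assert (1 / (2 * (x + 1)) * x <= 1 / 2).
    { apply Rmult_le_reg_r with (2 * (x + 1)). lra.
      replace (1 / (2 * (x + 1)) * x * (2 * (x + 1))) with x by (field; lra). lra. }
    lra. }
  assert (Hdx2 : del * (x * x) <= eps / 4).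
  { assert (del <= eps / (4 * (x * x + 1))) by apply Rmin_l.
    assert (del * (x * x) <= eps / (4 * (x * x + 1)) * (x * x)) by (apply Rmult_le_compat_r; nra).
    assert (eps / (4 * (x * x + 1)) * (x * x) <= eps / 4).
    { apply Rmult_le_reg_r with (4 * (x * x + 1)). lra.
      replace (eps / (4 * (x * x + 1)) * (x * x) * (4 * (x * x + 1))) with (eps * (x * x)) by (field; lra).
      destruct eps as [e He]; simpl. nra. }
    lra. }
  apply Rabs_le_between in Hw2.
  assert (Hdxua : del * (x * ua) <= ua / 2).
  { replace (del * (x * ua)) with ((del * x) * ua) by ring. nra. }
  assert (Hwpos : ua / 2 <= w) by lra.
  apply ball_R.
  change (Rabs (psi b - psi a - - x) < eps).
  rewrite HD.
  replace (- x * ua / w - - x) with (x * (w - ua) / w) by (field; lra).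
  rewrite Rabs_div by lra. rewrite (Rabs_right w) by lra.
  apply Rmult_lt_reg_r with w. lra.
  unfold Rdiv. rewrite Rmult_assoc, Rinv_l by lra. rewrite Rmult_1_r.
  rewrite Rabs_mult, (Rabs_right x) by lra.
  assert (Habs : Rabs (w - ua) <= del * (x * ua)) by (apply Rabs_le_between; lra).
  assert (x * Rabs (w - ua) <= x * (del * (x * ua))) by (apply Rmult_le_compat_l; lra).
  assert (x * (del * (x * ua)) = del * (x * x) * ua) by ring.
  assert (del * (x * x) * ua <= eps / 4 * ua) by (apply Rmult_le_compat_r; lra).
  assert (0 < eps * ua) by (apply Rmult_lt_0_compat; [apply cond_pos|lra]).
  assert (eps * (ua / 2) <= eps * w) by (apply Rmult_le_compat_l; [left; apply cond_pos|lra]).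
  lra.
Qed.

Lemma Rmin_lip (c p q : R) : Rabs (Rmin c p - Rmin c q) <= Rabs (p - q).
Proof.
  unfold Rmin; destruct (Rle_dec c p); destruct (Rle_dec c q);
  unfold Rabs; repeat destruct Rcase_abs; lra.
Qed.

Lemma lim_Rmin (g : R -> R) (c l : R) : is_lim g p_infty l ->
  is_lim (fun a => Rmin c (g a)) p_infty (Rmin c l).
Proof.
  intros H. unfold is_lim. apply filterlim_locally. intros eps.
  destruct (lim_eps g l H eps (cond_pos eps)) as [M HM].
  exists M. intros t Ht. apply ball_R.
  eapply Rle_lt_trans. apply Rmin_lip. apply HM; auto.
Qed.

Lemma Rmin_scale (k p q : R) : 0 <= k -> Rmin (k * p) (k * q) = k * Rmin p q.
Proof.
  intros Hk. unfold Rmin. destruct (Rle_dec p q); destruct (Rle_dec (k * p) (k * q)); try reflexivity.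
  - exfalso. apply n. apply Rmult_le_compat_l; auto.
  - destruct (Req_dec k 0) as [->|Hk0]. ring.
    exfalso. apply n. apply Rmult_le_reg_l with k. lra. auto.
Qed.

Theorem theorem6 (F f f' : R -> R) (x : R) :
  is_cont_cdf_with_density F f ->
  AssumptionA1 F f f' ->
  MDA_Lambda F ->
  AssumptionA3 F f f' ->
  right_endpoint_infinite F ->
  0 <= x ->
  let u := fun a => (1 - F a) / f a in
  filterlim
    (fun a => real (zstar F f f' a (a + x * u a)) / (1 - F (a + x * u a)))
    (Rbar_locally p_infty) (locally (limit_value x)).
Proof.
  intros _ HA1 _ HA3 Hend Hx u.
  set (r := fun a => - ((1 - F a) * f' a / f a ^ 2)).
  set (mp := fun a => Rmin x (1 / r a)).
  set (E := fun a => ln (1 - F (a + x * ((1 - F a) / f a))) - ln (1 - F a)).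
  assert (Hr : is_lim r p_infty 1).
  { pose proof (is_lim_opp _ _ _ HA3) as H. simpl in H.
    replace (- -1) with 1 in H by ring. exact H. }
  assert (Hinv : is_lim (fun a => 1 / r a) p_infty 1).
  { pose proof (is_lim_inv _ _ _ Hr) as H.
    assert (H1 : Finite 1 <> Finite 0) by (intros H'; injection H'; lra).
    specialize (H H1). simpl in H. rewrite Rinv_1 in H.
    eapply is_lim_ext; [|exact H]. intros y; simpl. unfold Rdiv. ring. }
  assert (Hm : is_lim mp p_infty (Rmin x 1)) by (apply lim_Rmin; auto).
  set (m1 := Rmin x 1).
  assert (HN : is_lim (fun a => 1 - mp a + r a * (mp a * mp a) / 2) p_infty
                 (1 - m1 + 1 * (m1 * m1) / 2)).
  { apply (is_lim_plus _ _ _ (1 - m1) (1 * (m1 * m1) / 2)).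
    apply (is_lim_minus _ _ _ 1 m1). apply is_lim_const. exact Hm. reflexivity.
    eapply is_lim_ext with (fun a => r a * (mp a * mp a) * / 2). intros; reflexivity.
    apply (is_lim_mult _ _ _ (1 * (m1 * m1)) (/ 2)).
    apply (is_lim_mult _ _ _ 1 (m1 * m1)). exact Hr.
    apply (is_lim_mult _ _ _ m1 m1); auto. simpl; auto. simpl; auto.
    apply is_lim_const. simpl; auto. reflexivity. }
  assert (HE : filterlim E (Rbar_locally p_infty) (locally (- x))).
  { apply (psi_lim F f f'); auto. }
  assert (HD : is_lim (fun a => exp (E a)) p_infty (exp (- x))).
  { unfold is_lim. eapply filterlim_comp. exact HE. apply continuous_exp. }
  assert (HQ := is_lim_div _ _ _ _ _ HN HD).
  assert (He0 : Finite (exp (- x)) <> Finite 0).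
  { intros H'. injection H'. pose proof (exp_pos (- x)). lra. }
  specialize (HQ He0). simpl in HQ.
  specialize (HQ ltac:(simpl; auto)).
  assert (Hval : (1 - m1 + 1 * (m1 * m1) / 2) / exp (- x) = limit_value x).
  { unfold limit_value, m1. rewrite exp_Ropp.
    destruct (Rle_dec 1 x).
    - rewrite Rmin_right by lra. field. pose proof (exp_pos x); lra.
    - rewrite Rmin_left by lra. field. pose proof (exp_pos x); lra. }
  replace ((1 - m1 + 1 * (m1 * m1) / 2) * / exp (- x)) with (limit_value x) in HQ by (rewrite <- Hval; reflexivity).
  apply filterlim_ext_loc with (fun a => (1 - mp a + r a * (mp a * mp a) / 2) / exp (E a)).
  2: exact HQ.
  destruct HA1 as [z [HF [Hf [Hp _]]]].
  destruct (lim_eps _ _ HA3 (1 / 2) ltac:(lra)) as [M HM].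
  exists (Rmax z M). intros a Ha.
  pose proof (Rmax_l z M); pose proof (Rmax_r z M).
  specialize (HM a ltac:(lra)).
  assert (Hfa : 0 < f a) by (apply Hp; lra).
  assert (Hb : 0 < 1 - F a) by (specialize (Hend a); lra).
  apply Rabs_lt_between in HM.
  assert (Hra : 1 / 2 < r a < 3 / 2) by (unfold r; lra).
  assert (Hfa' : 0 < - f' a).
  { assert (0 < (1 - F a) * (- f' a) / f a ^ 2).
    { replace ((1 - F a) * (- f' a) / f a ^ 2) with (r a) by (unfold r; field; lra). lra. }
    assert (0 < f a ^ 2) by (apply pow_lt; lra).
    assert (0 < (1 - F a) * (- f' a)).
    { replace ((1 - F a) * (- f' a)) with ((1 - F a) * (- f' a) / f a ^ 2 * f a ^ 2) by (field; lra).
      apply Rmult_lt_0_compat; lra. }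
    destruct (Rle_or_lt (- f' a) 0); auto. nra. }
  assert (Hr2 : f a ^ 2 < 2 * (1 - F a) * (- f' a)).
  { assert (E1 : (1 - F a) * (- f' a) = r a * f a ^ 2) by (unfold r; field; lra).
    assert (0 < f a ^ 2) by (apply pow_lt; lra).
    assert (2 * (1 - F a) * (- f' a) = 2 * r a * f a ^ 2) by lra. nra. }
  assert (Hua : 0 < u a) by (unfold u; apply Rdiv_lt_0_compat; auto).
  assert (Hba : a <= a + x * u a) by (assert (0 <= x * u a) by (apply Rmult_le_pos; lra); lra).
  rewrite (zval F f f' a (a + x * u a) Hb Hfa Hfa' Hr2 Hba).
  assert (HmE : Rmin (a + x * u a - a) (f a / - f' a) = u a * mp a).
  { unfold mp. rewrite <- Rmin_scale by lra. f_equal. ring.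
    unfold u, r. field. repeat split; lra. }
  rewrite HmE.
  assert (HEx : exp (E a) = (1 - F (a + x * u a)) / (1 - F a)).
  { unfold E. fold (u a). unfold Rminus at 1. rewrite exp_plus, exp_Ropp, !exp_ln; auto.
    specialize (Hend (a + x * u a)); lra. }
  rewrite HEx.
  assert (Hbb : 0 < 1 - F (a + x * u a)) by (specialize (Hend (a + x * u a)); lra).
  unfold u in Hbb. unfold u, r. field. repeat split; lra.
Qed.
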